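(* Let $S\ni h$ be a $2$-admissible polarized lattice with $h^2=8$, $\Delta$ a Weyl chamber for $\operatorname{rt}(S,h)$, $\Gamma=\operatorname{Fn}_\Delta(S,h)$, and $v_1,v_2\in\Gamma$ two distinct vertices. Then the induced subgraph $\operatorname{Star}(v_1)\cap\operatorname{Star}(v_2)$ has no edges, and: (1) if $v_1\cdot v_2=1$, then $|\operatorname{Star}(v_1)\cap\operatorname{Star}(v_2)|\le1$; (2) if $v_1\cdot v_2=0$, then $|\operatorname{Star}(v_1)\cap\operatorname{Star}(v_2)|\le3$. If, in addition, $S\ni h$ is $3$-admissible, then both inequalities are strict.
   Context: All lattices even; $(S,h)$ polarized: $S$ hyperbolic, $h^2>0$. $\operatorname{root}_n(S,h)=\{r: r^2=-2,\ r\cdot h=n\}$, $\operatorname{rt}(S,h)$ spanned by $\operatorname{root}_0(S,h)$; a Weyl chamber $\Delta$ has simple roots $\mathfrak{b}(\Delta)$. $\Gamma=\operatorname{Fn}_\Delta(S,h)=\{l\in\operatorname{root}_1(S,h): l\cdot e\ge0\ \forall e\in\mathfrak{b}(\Delta)\}$, with edges of multiplicity $l_1\cdot l_2$. $\operatorname{Star}(v)=\{l\in\Gamma: l\cdot v=1\}$. $w$ is $m$-isotropic if $w^2=0$, $w\cdot h=m$; $2$-admissible: no $1$- or $2$-isotropic vector; $3$-admissible: in addition no $3$-isotropic vector. *)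

(* Defs.v *)
(* An even lattice of rank n is Z^n with an integral Gram matrix G. *)
From HB Require Import structures.
From mathcomp Require Import all_boot all_order all_algebra.
Set Implicit Arguments. Unset Strict Implicit. Unset Printing Implicit Defensive.
Import Order.TTheory GRing.Theory Num.Theory.
Local Open Scope ring_scope.

Definition lform (n : nat) (G : 'M[int]_n) (x y : 'rV[int]_n) : int :=
  (x *m G *m y^T) 0 0.

Definition even_lattice (n : nat) (G : 'M[int]_n) : Prop :=
  G^T = G /\ forall i, (2 %| G i i)%Z.

(* hyperbolic: signature (1, n-1), via a rational diagonalization (Sylvester) *)
Definition hyperbolic (n : nat) (G : 'M[int]_n) : Prop :=
  exists P : 'M[rat]_n, P \in unitmx /\
    exists i0 : 'I_n,
      let D := P *m map_mx (fun z : int => z%:~R : rat) G *m P^T in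
      (forall i j, i != j -> D i j = 0) /\ 0 < D i0 i0 /\
      (forall i, i != i0 -> D i i < 0).

Definition root (n : nat) (G : 'M[int]_n) (h : 'rV[int]_n) (k : int)
  (r : 'rV[int]_n) : Prop := lform G r r = -2 /\ lform G r h = k.

Definition isotropic (n : nat) (G : 'M[int]_n) (h : 'rV[int]_n) (m : int)
  (w : 'rV[int]_n) : Prop := lform G w w = 0 /\ lform G w h = m.

Definition admissible2 (n : nat) (G : 'M[int]_n) (h : 'rV[int]_n) : Prop :=
  forall w, ~ isotropic G h 1 w /\ ~ isotropic G h 2 w.

Definition admissible3 (n : nat) (G : 'M[int]_n) (h : 'rV[int]_n) : Prop :=
  admissible2 G h /\ forall w, ~ isotropic G h 3 w.

(* A Weyl chamber of rt(S,h) is encoded by a generic vector w in h^perp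
   (a point of the chamber, scaled to be integral). *)
Definition weyl_generic (n : nat) (G : 'M[int]_n) (h w : 'rV[int]_n) : Prop :=
  lform G w h = 0 /\ forall r, root G h 0 r -> lform G r w != 0.

Definition pos_root (n : nat) (G : 'M[int]_n) (h w r : 'rV[int]_n) : Prop :=
  root G h 0 r /\ 0 < lform G r w.

Definition simple_root (n : nat) (G : 'M[int]_n) (h w e : 'rV[int]_n) : Prop :=
  pos_root G h w e /\
  ~ (exists r1 r2, pos_root G h w r1 /\ pos_root G h w r2 /\ e = r1 + r2).

Definition Fn (n : nat) (G : 'M[int]_n) (h w l : 'rV[int]_n) : Prop :=
  root G h 1 l /\ forall e, simple_root G h w e -> 0 <= lform G l e.

Definition star2 (n : nat) (G : 'M[int]_n) (h w v1 v2 l : 'rV[int]_n) : Prop :=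
  Fn G h w l /\ lform G l v1 = 1 /\ lform G l v2 = 1.

Definition at_most (n : nat) (k : nat) (P : 'rV[int]_n -> Prop) : Prop :=
  forall s : seq 'rV[int]_n, uniq s -> (forall x, x \in s -> P x) ->
    (size s <= k)%N.

(* Main.v *)
Require Import Defs.
From mathcomp Require Import all_boot all_order all_algebra.
From mathcomp Require Import zify ring lra.
From Stdlib Require Import Classical_Prop.
Import Order.TTheory GRing.Theory Num.Theory.
Local Open Scope ring_scope.

Section BF.
Variable (R : comRingType) (n : nat) (G : 'M[R]_n).
Definition bf (x y : 'rV[R]_n) : R := (x *m G *m y^T) 0 0.
Lemma bfDl x y z : bf (x + y) z = bf x z + bf y z.
Proof. by rewrite /bf !mulmxDl mxE. Qed.
Lemma bfDr x y z : bf x (y + z) = bf x y + bf x z.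
Proof. by rewrite /bf linearD /= mulmxDr mxE. Qed.
Lemma bfZl a x z : bf (a *: x) z = a * bf x z.
Proof. by rewrite /bf -!scalemxAl mxE. Qed.
Lemma bfZr a x z : bf x (a *: z) = a * bf x z.
Proof. by rewrite /bf linearZ /= -scalemxAr mxE. Qed.
Lemma bfNl x z : bf (- x) z = - bf x z.
Proof. by rewrite -scaleN1r bfZl mulN1r. Qed.
Lemma bfNr x z : bf x (- z) = - bf x z.
Proof. by rewrite -scaleN1r bfZr mulN1r. Qed.
Lemma bf0l z : bf 0 z = 0.
Proof. by rewrite /bf !mul0mx mxE. Qed.
Lemma bfC x y : G^T = G -> bf x y = bf y x.
Proof.
move=> HG; rewrite /bf.
have E : forall M : 'M[R]_1, M 0 0 = M^T 0 0 by move=> M; rewrite mxE.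
by rewrite E !trmx_mul trmxK HG mulmxA.
Qed.
End BF.
Arguments bf {R n} G x y.
Arguments bfC {R n} G x y.
Arguments bfDl {R n G}. Arguments bfDr {R n G}. Arguments bfZl {R n G}. Arguments bfZr {R n G}.
Arguments bfNl {R n G}. Arguments bfNr {R n G}. Arguments bf0l {R n G}.

Lemma lformE n (G : 'M[int]_n) x y : lform G x y = bf G x y.
Proof. by []. Qed.

Definition mq n (G : 'M[int]_n) := map_mx (fun z : int => z%:~R : rat) G.
Definition vq n (x : 'rV[int]_n) := map_mx (fun z : int => z%:~R : rat) x.

Arguments mq {n}. Arguments vq {n}.
Lemma lform_q n (G : 'M[int]_n) x y :
  (lform G x y)%:~R = bf (mq G) (vq x) (vq y).
Proof. by rewrite /bf /mq /vq map_trmx -!map_mxM mxE. Qed.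

Lemma diag_form n (D : 'M[rat]_n) (X : 'rV[rat]_n) :
  (forall i j, i != j -> D i j = 0) ->
  (X *m D *m X^T) 0 0 = \sum_i D i i * X 0 i ^+ 2.
Proof.
move=> HD; rewrite mxE; apply: eq_bigr => i _.
rewrite !mxE (bigD1 i) //= big1 ?addr0 => [|j ji]; last by rewrite HD ?mulr0.
by rewrite expr2; ring. Qed.

Lemma neg_form n (D : 'M[rat]_n) i0 (Y : 'rV[rat]_n) :
  (forall i, i != i0 -> D i i < 0) -> Y 0 i0 = 0 ->
  \sum_i D i i * Y 0 i ^+ 2 <= 0 /\ (\sum_i D i i * Y 0 i ^+ 2 = 0 -> Y = 0).
Proof.
move=> HD HY.
have T : forall i, 0 <= - (D i i * Y 0 i ^+ 2).
  move=> i; case: (eqVneq i i0) => [->|ii0]; first by rewrite HY expr0n mulr0 oppr0.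
  rewrite -mulNr mulr_ge0 // ?sqr_ge0 // oppr_ge0 ltW //; exact: HD.
split.
  by rewrite -oppr_ge0 -sumrN; apply: sumr_ge0 => i _.
move=> H0; apply/rowP => i; rewrite mxE.
case: (eqVneq i i0) => [->//|ii0].
have : - (D i i * Y 0 i ^+ 2) = 0.
  by apply: (@psumr_eq0P _ _ predT (fun i => - (D i i * Y 0 i ^+ 2))) => //; rewrite sumrN H0 oppr0.
move/eqP; rewrite oppr_eq0 mulf_eq0 expf_eq0 /= => /orP [|/eqP //].
by move/eqP=> E; have := HD i ii0; rewrite E ltxx.
Qed.
Lemma ND_rat n (Gq P : 'M[rat]_n) i0 (hq x : 'rV[rat]_n) :
  Gq^T = Gq -> P \in unitmx ->
  (forall i j, i != j -> (P *m Gq *m P^T) i j = 0) ->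
  (forall i, i != i0 -> (P *m Gq *m P^T) i i < 0) ->
  0 < bf Gq hq hq -> bf Gq x hq = 0 -> bf Gq x x <= 0 /\ (bf Gq x x = 0 -> x = 0).
Proof.
set D := P *m Gq *m P^T => HG HP Hoff Hneg Hh Hx.
have coord : forall y : 'rV[rat]_n, bf Gq y y = \sum_i D i i * (y *m invmx P) 0 i ^+ 2.
  move=> y; rewrite -diag_form // /D /bf.
  rewrite -{1 2}(mulmxKV HP y) trmx_mul !mulmxA //.
set X := x *m invmx P; set H := hq *m invmx P.
have H0 : H 0 i0 != 0.
  apply/negP => /eqP E; have [+ _] := @neg_form _ D i0 H Hneg E.
  by rewrite -coord leNgt Hh.
set t := X 0 i0 / H 0 i0.
set u := x - t *: hq.
have U0 : (u *m invmx P) 0 i0 = 0.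
  have E2 : forall (A B : 'rV[rat]_n) c, (A - c *: B) 0 i0 = A 0 i0 - c * B 0 i0 by move=> A B c; rewrite !mxE.
  by rewrite /u mulmxBl -scalemxAl -/X -/H E2 /t divfK // subrr.
have [Qu Qu0] := @neg_form _ D i0 _ Hneg U0; rewrite -coord in Qu Qu0.
have Buh : bf Gq u hq = - (t * bf Gq hq hq).
  by rewrite /u bfDl bfNl bfZl Hx add0r.
have Qx : bf Gq x x = bf Gq u u - t ^+ 2 * bf Gq hq hq.
  have Ex : x = u + t *: hq by rewrite /u subrK.
  move: Buh Ex; clearbody u => Buh ->.
  rewrite bfDl !bfDr !bfZl !bfZr (bfC Gq hq u HG) Buh; ring.
have tq : 0 <= t ^+ 2 * bf Gq hq hq by rewrite mulr_ge0 // ?sqr_ge0 // ltW.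
split; first by rewrite Qx; lra.
move=> Q0.
have Qu00 : bf Gq u u = 0 by lra.
have t0 : t ^+ 2 * bf Gq hq hq = 0 by lra.
move: t0 => /eqP; rewrite mulf_eq0 (gt_eqF Hh) orbF expf_eq0 /= => /eqP t0.
have := Qu0 Qu00 => /(congr1 (fun M => M *m P)); rewrite mulmxKV // mul0mx /u t0 scale0r subr0.
by [].
Qed.

Lemma ND_int n (G : 'M[int]_n) (h z : 'rV[int]_n) :
  even_lattice G -> hyperbolic G -> 0 < lform G h h -> lform G z h = 0 ->
  lform G z z <= 0 /\ (lform G z z = 0 -> z = 0).
Proof.
move=> [HG _] [P [HP [i0 [Hoff [_ Hneg]]]]] Hh Hz.
have HGq : (mq G)^T = mq G by rewrite /mq map_trmx HG.
have Hhq : 0 < bf (mq G) (vq h) (vq h) by rewrite -lform_q ltr0z.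
have Hzq : bf (mq G) (vq z) (vq h) = 0 by rewrite -lform_q Hz.
have [A B] := @ND_rat n (mq G) P i0 (vq h) (vq z) HGq HP Hoff Hneg Hhq Hzq.
split; first by move: A; rewrite -lform_q lerz0.
move=> E; have := B; rewrite -lform_q E => /(_ erefl) Ez.
apply/rowP => j; have := congr1 (fun M : 'rV[rat]_n => M 0 j) Ez; rewrite !mxE => /eqP.
by rewrite intr_eq0 => /eqP.
Qed.

Section LF.
Variables (n : nat) (G : 'M[int]_n).
Lemma lformDl x y z : lform G (x + y) z = lform G x z + lform G y z. Proof. exact: bfDl. Qed.
Lemma lformDr x y z : lform G x (y + z) = lform G x y + lform G x z. Proof. exact: bfDr. Qed.
Lemma lformNl x z : lform G (- x) z = - lform G x z. Proof. exact: bfNl. Qed.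
Lemma lformNr x z : lform G x (- z) = - lform G x z. Proof. exact: bfNr. Qed.
Lemma lform0l z : lform G 0 z = 0. Proof. exact: bf0l. Qed.
Lemma lformC x y : even_lattice G -> lform G x y = lform G y x.
Proof. by move=> [HG _]; exact: bfC. Qed.
End LF.
Arguments lformDl {n G}. Arguments lformDr {n G}. Arguments lformNl {n G}. Arguments lformNr {n G}. Arguments lform0l {n G}. Arguments lformC {n G}.

Ltac expand := rewrite ?(lformDl, lformDr, lformNl, lformNr).
Ltac expandin H := rewrite ?(lformDl, lformDr, lformNl, lformNr) in H.

Lemma pos_nonneg n (G : 'M[int]_n) h w l : Fn G h w l ->
  forall r, pos_root G h w r -> 0 <= lform G l r.
Proof.
move=> [_ Hl].
suff H : forall k : nat, forall r, pos_root G h w r -> lform G r w <= k%:Z -> 0 <= lform G l r.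
  move=> r Hr; apply: (H `|lform G r w|%N r Hr); lia.
elim=> [|k IH] r Hr Hk.
  by have := Hr.2; lia.
case: (classic (simple_root G h w r)) => [Hs|Hns]; first exact: Hl.
have : exists r1 r2, pos_root G h w r1 /\ pos_root G h w r2 /\ r = r1 + r2.
  by apply: NNPP => C; apply: Hns; split.
move=> [r1 [r2 [H1 [H2 E]]]].
rewrite E in Hk *; expand; expandin Hk.
have P1 := H1.2; have P2 := H2.2.
apply: addr_ge0; [apply: (IH r1 H1) | apply: (IH r2 H2)]; lia.
Qed.

Arguments pos_nonneg {n G h w l}.
Lemma Fn_pair n (G : 'M[int]_n) h w l1 l2 : even_lattice G -> hyperbolic G ->
  lform G h h = 8 -> weyl_generic G h w ->
  Fn G h w l1 -> Fn G h w l2 -> l1 <> l2 -> 0 <= lform G l1 l2.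
Proof.
move=> HE HH Hh [_ Hw] F1 F2 Hne.
move: (F1) (F2) => [[R1 H1] _] [[R2 H2] _].
have S12 := lformC l1 l2 HE.
have Hzh : lform G (l1 - l2) h = 0 by expand; lia.
have Hh0 : 0 < lform G h h by rewrite Hh.
have [Hle Heq] := @ND_int _ G h (l1 - l2) HE HH Hh0 Hzh.
have Ezz : lform G (l1 - l2) (l1 - l2) = -4 - 2 * lform G l1 l2 by expand; lia.
case: (ltrP (lform G l1 l2) 0) => [Hneg|//].
have : lform G l1 l2 = -2 \/ lform G l1 l2 = -1 by lia.
case=> [Eb|Eb].
  exfalso; apply: Hne; apply/eqP; rewrite -subr_eq0; apply/eqP; apply: Heq; lia.
have Rz : Defs.root G h 0 (l1 - l2) by split; [lia | exact: Hzh].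
have := Hw _ Rz; rewrite neq_lt => /orP [Hlt|Hgt].
  have Rz' : pos_root G h w (l2 - l1).
    split; [split|]; expand; expandin Hlt; lia.
  by have := pos_nonneg F2 _ Rz'; expand; lia.
have Rz' : pos_root G h w (l1 - l2) by split.
by have := pos_nonneg F1 _ Rz'; expand; lia.
Qed.

Lemma K1 n (G : 'M[int]_n) h w v1 v2 l1 l2 : even_lattice G -> hyperbolic G -> lform G h h = 8 ->
  lform G v1 v1 = -2 -> lform G v1 h = 1 -> lform G v2 v2 = -2 -> lform G v2 h = 1 ->
  star2 G h w v1 v2 l1 -> star2 G h w v1 v2 l2 -> lform G v1 v2 + lform G l1 l2 <= 0.
Proof.
move=> HE HH Hh A1 B1 A2 B2 [[[C1 D1] _] [E11 E12]] [[[C2 D2] _] [E21 E22]].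
have S := fun x y => lformC x y HE.
have s1 := S l1 l2; have s2 := S l1 v1; have s3 := S l1 v2; have s4 := S l1 h.
have s5 := S l2 v1; have s6 := S l2 v2; have s7 := S l2 h; have s8 := S v1 v2.
have s9 := S v1 h; have s10 := S v2 h.
have Hzh : lform G (l1 + l1 + l2 + l2 + v1 + v1 + v2 + v2 - h) h = 0 by expand; lia.
have Hh0 : 0 < lform G h h by rewrite Hh.
have [Hle Heq] := @ND_int _ G h _ HE HH Hh0 Hzh.
have Ezz : lform G (l1 + l1 + l2 + l2 + v1 + v1 + v2 + v2 - h) (l1 + l1 + l2 + l2 + v1 + v1 + v2 + v2 - h)
   = 8 * lform G v1 v2 + 8 * lform G l1 l2 - 8 by expand; lia.
have Ezv : lform G (l1 + l1 + l2 + l2 + v1 + v1 + v2 + v2 - h) v1 = 2 * lform G v1 v2 - 1 by expand; lia.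
have : lform G v1 v2 + lform G l1 l2 <= 0 \/ lform G v1 v2 + lform G l1 l2 = 1 by lia.
case=> // E1.
have Z := Heq (ltac:(lia)).
by move: Ezv; rewrite Z lform0l; lia.
Qed.

Lemma K4 n (G : 'M[int]_n) h w v1 v2 l1 l2 l3 l4 : even_lattice G -> hyperbolic G -> lform G h h = 8 ->
  lform G v1 v1 = -2 -> lform G v1 h = 1 -> lform G v2 v2 = -2 -> lform G v2 h = 1 ->
  lform G v1 v2 = 0 ->
  star2 G h w v1 v2 l1 -> star2 G h w v1 v2 l2 -> star2 G h w v1 v2 l3 -> star2 G h w v1 v2 l4 ->
  lform G l1 l2 = 0 -> lform G l1 l3 = 0 -> lform G l1 l4 = 0 ->
  lform G l2 l3 = 0 -> lform G l2 l4 = 0 -> lform G l3 l4 = 0 -> False.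
Proof.
move=> HE HH Hh A1 B1 A2 B2 a0 [[[C1 D1] _] [E11 E12]] [[[C2 D2] _] [E21 E22]]
  [[[C3 D3] _] [E31 E32]] [[[C4 D4] _] [E41 E42]] b12 b13 b14 b23 b24 b34.
have S := fun x y => lformC x y HE.
have s1 := S l1 l2; have s2 := S l1 v1; have s3 := S l1 v2; have s4 := S l1 h.
have s5 := S l2 v1; have s6 := S l2 v2; have s7 := S l2 h; have s8 := S v1 v2.
have s9 := S v1 h; have s10 := S v2 h.
have t1 := S l3 l1; have t2 := S l3 l2; have t3 := S l3 v1; have t4 := S l3 v2; have t5 := S l3 h.
have u1 := S l4 l1; have u2 := S l4 l2; have u3 := S l4 v1; have u4 := S l4 v2; have u5 := S l4 h.
have u6 := S l4 l3.
have Hzh : lform G (v1 + v1 + v2 + v2 + l1 + l2 + l3 + l4 - h) h = 0 by expand; lia.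
have Hh0 : 0 < lform G h h by rewrite Hh.
have [Hle Heq] := @ND_int _ G h _ HE HH Hh0 Hzh.
have Ezz : lform G (v1 + v1 + v2 + v2 + l1 + l2 + l3 + l4 - h) (v1 + v1 + v2 + v2 + l1 + l2 + l3 + l4 - h)
   = 0 by expand; lia.
have Ezv : lform G (v1 + v1 + v2 + v2 + l1 + l2 + l3 + l4 - h) v1 = -1 by expand; lia.
by move: Ezv; rewrite (Heq Ezz) lform0l.
Qed.

Arguments Fn_pair {n G h w l1 l2}. Arguments K1 {n G h w v1 v2 l1 l2}. Arguments K4 {n G h w v1 v2 l1 l2 l3 l4}.

Theorem lemma5p2 (n : nat) (G : 'M[int]_n) (h w v1 v2 : 'rV[int]_n) :
  even_lattice G -> hyperbolic G -> lform G h h = 8 ->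
  admissible2 G h -> weyl_generic G h w ->
  Fn G h w v1 -> Fn G h w v2 -> v1 <> v2 ->
  (forall l1 l2, star2 G h w v1 v2 l1 -> star2 G h w v1 v2 l2 -> l1 <> l2 ->
     lform G l1 l2 = 0) /\
  (lform G v1 v2 = 1 -> at_most 1 (star2 G h w v1 v2)) /\
  (lform G v1 v2 = 0 -> at_most 3 (star2 G h w v1 v2)) /\
  (admissible3 G h ->
     (lform G v1 v2 = 1 -> at_most 0 (star2 G h w v1 v2)) /\
     (lform G v1 v2 = 0 -> at_most 2 (star2 G h w v1 v2))).
Proof.
move=> HE HH Hh _ Hw F1 F2 Hne.
have a0 := Fn_pair HE HH Hh Hw F1 F2 Hne.
move: (F1) (F2) => [[A1 B1] _] [[A2 B2] _].
have PA : forall l1 l2, star2 G h w v1 v2 l1 -> star2 G h w v1 v2 l2 -> l1 <> l2 ->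
     lform G l1 l2 = 0.
  move=> l1 l2 S1 S2 N12.
  have := K1 HE HH Hh A1 B1 A2 B2 S1 S2.
  have := Fn_pair HE HH Hh Hw S1.1 S2.1 N12; lia.
have S := fun x y => lformC x y HE.
split; first exact: PA.
split.
  move=> E s Hu Hall; case: s Hu Hall => [|x1 [|x2 s]] //= Hu Hall.
  move: Hu; rewrite !inE negb_or => /andP [/andP [n12 _] _].
  have S1 := Hall x1 (mem_head _ _).
  have S2 : star2 G h w v1 v2 x2 by apply: Hall; rewrite !inE eqxx orbT.
  have := K1 HE HH Hh A1 B1 A2 B2 S1 S2.
  have := Fn_pair HE HH Hh Hw S1.1 S2.1 (elimN eqP n12); lia.
split.
  move=> E s Hu Hall; case: s Hu Hall => [|x1 [|x2 [|x3 [|x4 s]]]] //= Hu Hall.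
  move: Hu; rewrite !inE !negb_or => /andP [/and4P [n12 n13 n14 _] /andP [/and3P [n23 n24 _] /andP [/andP [n34 _] _]]].
  have S1 := Hall x1 (mem_head _ _).
  have S2 : star2 G h w v1 v2 x2 by apply: Hall; rewrite !inE eqxx !orbT.
  have S3 : star2 G h w v1 v2 x3 by apply: Hall; rewrite !inE eqxx !orbT.
  have S4 : star2 G h w v1 v2 x4 by apply: Hall; rewrite !inE eqxx !orbT.
  exfalso; apply: (K4 HE HH Hh A1 B1 A2 B2 E S1 S2 S3 S4); apply: PA => //; exact/eqP.
move=> [_ H3]; split.
  move=> E s Hu Hall; case: s Hu Hall => [|x1 s] //= Hu Hall.
  have [[[C1 D1] _] [E11 E12]] := Hall x1 (mem_head _ _).
  have s2 := S x1 v1; have s3 := S x1 v2; have s8 := S v1 v2.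
  have s9 := S v1 h; have s10 := S v2 h; have s4 := S x1 h.
  exfalso; apply: (H3 (x1 + v1 + v2)); split; expand; lia.
move=> E s Hu Hall; case: s Hu Hall => [|x1 [|x2 [|x3 s]]] //= Hu Hall.
move: Hu; rewrite !inE !negb_or => /andP [/and3P [n12 n13 _] /andP [/andP [n23 _] _]].
have S1 := Hall x1 (mem_head _ _).
have S2 : star2 G h w v1 v2 x2 by apply: Hall; rewrite !inE eqxx !orbT.
have S3 : star2 G h w v1 v2 x3 by apply: Hall; rewrite !inE eqxx !orbT.
have b12 := PA _ _ S1 S2 (elimN eqP n12).
have b13 := PA _ _ S1 S3 (elimN eqP n13).
have b23 := PA _ _ S2 S3 (elimN eqP n23).
move: S1 S2 S3 => [[[C1 D1] _] [E11 E12]] [[[C2 D2] _] [E21 E22]] [[[C3 D3] _] [E31 E32]].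
have s1 := S x1 x2; have s2 := S x1 v1; have s3 := S x1 v2; have s4 := S x1 h.
have s5 := S x2 v1; have s6 := S x2 v2; have s7 := S x2 h; have s8 := S v1 v2.
have s9 := S v1 h; have s10 := S v2 h.
have t1 := S x3 x1; have t2 := S x3 x2; have t3 := S x3 v1; have t4 := S x3 v2; have t5 := S x3 h.
exfalso; apply: (H3 (h - (v1 + v2 + x1 + x2 + x3))); split; expand; lia.
Qed.
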